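(* $D(18,\{3,4\})\le 33$; equivalently, there exists a $\{K_3,K_4\}$-decomposition of $K_{18}$ with $\alpha\le 15$ (indeed one with $15$ copies of $K_3$ and $18$ copies of $K_4$).
   Context: A $\{K_3,K_4\}$-decomposition of $K_v$ is a collection of subgraphs, each isomorphic to $K_3$ or $K_4$, such that every edge of $K_v$ lies in exactly one of them. In such a decomposition $\alpha$ and $\beta$ denote the numbers of copies of $K_3$ and $K_4$; since $3\alpha+6\beta=\binom{v}{2}$, minimizing $\alpha+\beta$ is equivalent to minimizing $\alpha$. $D(v,\{3,4\})$ is the minimum of $\alpha+\beta$ over all such decompositions of $K_v$. *)

(* Defs.v *)
From mathcomp Require Import all_boot.
Set Implicit Arguments. Unset Strict Implicit. Unset Printing Implicit Defensive.

(* K_v has vertex set 'I_v.  A copy of K_3 / K_4 inside K_v is determined by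
   its vertex set, a 3- or 4-element subset of 'I_v. *)
Definition is_K34_decomposition (v : nat) (B : seq {set 'I_v}) : Prop :=
  (forall b, b \in B -> #|b| = 3 \/ #|b| = 4) /\
  (forall x y : 'I_v, x != y ->
     count (fun b : {set 'I_v} => (x \in b) && (y \in b)) B = 1).

Definition alpha (v : nat) (B : seq {set 'I_v}) : nat :=
  count (fun b : {set 'I_v} => #|b| == 3) B.
Definition beta (v : nat) (B : seq {set 'I_v}) : nat :=
  count (fun b : {set 'I_v} => #|b| == 4) B.

Definition D_le (v n : nat) : Prop :=
  exists B : seq {set 'I_v}, is_K34_decomposition B /\ alpha B + beta B <= n.

(* Main.v *)
Require Import Defs.
From mathcomp Require Import all_boot.

Definition mk (s : seq nat) : {set 'I_18} := [set x : 'I_18 | nat_of_ord x \in s].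

Definition L : seq (seq nat) := [:: [:: 0; 16; 5; 9]; [:: 0; 7; 12; 13]; [:: 0; 2; 1; 14]; [:: 0; 8; 3]; [:: 0; 10; 11; 17]; [:: 0; 15; 4; 6]; [:: 1; 6; 8; 13]; [:: 1; 3; 5; 17]; [:: 1; 15; 12; 16]; [:: 1; 10; 4]; [:: 1; 9; 7; 11]; [:: 5; 14; 10; 15]; [:: 5; 4; 11; 13]; [:: 5; 12; 2; 6]; [:: 5; 8; 7]; [:: 6; 7; 10]; [:: 6; 14; 17]; [:: 6; 9; 3]; [:: 6; 11; 16]; [:: 11; 14; 3; 12]; [:: 11; 8; 2; 15]; [:: 12; 8; 4; 17]; [:: 12; 10; 9]; [:: 8; 9; 14]; [:: 8; 16; 10]; [:: 10; 3; 2; 13]; [:: 3; 15; 7]; [:: 3; 16; 4]; [:: 15; 17; 9; 13]; [:: 9; 2; 4]; [:: 4; 14; 7]; [:: 13; 16; 14]; [:: 2; 7; 16; 17]].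

Definition Bl : seq {set 'I_18} := map mk L.

Lemma card_mk s : #|mk s| = count (fun i => i \in s) (iota 0 18).
Proof.
rewrite cardE /enum_mem size_filter -val_enum_ord enumT count_map.
by apply: eq_count => x; rewrite /= inE.
Qed.

Lemma count_Bl (x y : 'I_18) :
  count (fun b : {set 'I_18} => (x \in b) && (y \in b)) Bl =
  count (fun s => (nat_of_ord x \in s) && (nat_of_ord y \in s)) L.
Proof. by rewrite count_map; apply: eq_count => s; rewrite /= !inE. Qed.

Lemma alpha_Bl : alpha Bl = 15.
Proof.
rewrite /alpha /Bl count_map.
rewrite (eq_count (a2 := fun s => count (fun i => i \in s) (iota 0 18) == 3)); last by move=> s; rewrite /= card_mk.
by vm_compute.
Qed.

Lemma beta_Bl : beta Bl = 18.
Proof.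
rewrite /beta /Bl count_map.
rewrite (eq_count (a2 := fun s => count (fun i => i \in s) (iota 0 18) == 4)); last by move=> s; rewrite /= card_mk.
by vm_compute.
Qed.

Lemma dec_Bl : is_K34_decomposition Bl.
Proof.
split.
  have H : all (fun s => (count (fun i => i \in s) (iota 0 18) == 3) || (count (fun i => i \in s) (iota 0 18) == 4)) L by vm_compute.
  move=> b /mapP [s sL ->]; rewrite card_mk.
  by move/allP: H => /(_ s sL) /orP [/eqP -> | /eqP ->]; [left | right].
have H : all (fun i => all (fun j => (i == j) || (count (fun s => (i \in s) && (j \in s)) L == 1)) (iota 0 18)) (iota 0 18) by vm_compute.
move=> x y xy; rewrite count_Bl.
have xI : nat_of_ord x \in iota 0 18 by rewrite mem_iota /=.
have yI : nat_of_ord y \in iota 0 18 by rewrite mem_iota /=.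
move/allP: H => /(_ _ xI) /allP /(_ _ yI) /orP [|/eqP //].
by move=> /eqP /val_inj E; rewrite E eqxx in xy.
Qed.

Theorem mainTheorem3 :
  D_le 18 33 /\
  exists B : seq {set 'I_18},
    is_K34_decomposition B /\ alpha B = 15 /\ beta B = 18.
Proof.
split.
  by exists Bl; split; [exact: dec_Bl | rewrite alpha_Bl beta_Bl].
by exists Bl; split; [exact: dec_Bl | split; [exact: alpha_Bl | exact: beta_Bl]].
Qed.
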